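(* Let $\mathcal{H}$ be a complex Hilbert space, let $T, S\in\mathbb{B}(\mathcal{H})$ be self-adjoint operators and let $N(\cdot)$ be a self-adjoint algebra norm on $\mathbb{B}(\mathcal{H})$. If $TS = ST$ or $TS=-ST$, then $$w_{N}(TS) \leq \min\{N(T)w_{N}(S),\ N(S)w_{N}(T)\}.$$
   Context: $\mathbb{B}(\mathcal{H})$ is the algebra of bounded linear operators on $\mathcal{H}$. A norm $N(\cdot)$ on $\mathbb{B}(\mathcal{H})$ is an algebra norm if $N(TS)\le N(T)N(S)$ for all $T,S$, and self-adjoint if $N(T^* )=N(T)$ for all $T$. For $A\in\mathbb{B}(\mathcal{H})$, ${\rm Re}(A)=\frac{A+A^*}{2}$. The generalized numerical radius is $w_N(T)=\sup_{\theta\in\mathbb{R}} N\big({\rm Re}(e^{i\theta}T)\big)$. *)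

(* Defs.v *)
From HB Require Import structures.
From mathcomp Require Import all_boot all_order all_algebra.
From mathcomp Require Import all_classical all_reals all_analysis.
From mathcomp Require Import Rstruct Rstruct_topology.
From mathcomp Require Import complex.
From Stdlib Require Import ClassicalEpsilon.

Set Implicit Arguments.
Unset Strict Implicit.
Unset Printing Implicit Defensive.

Import Order.TTheory GRing.Theory Num.Theory.
Local Open Scope ring_scope.

Notation RR := Rdefinitions.R.
Notation CC := (RR[i]).

Section Hilbert.
Variable V : lmodType CC.
Variable ip : V -> V -> CC.  (* inner product, linear in the first argument *)

Definition is_inner_product : Prop :=
  [/\ (forall (a : CC) (x y z : V), ip (a *: x + y) z = a * ip x z + ip y z),
      (forall x y : V, ip x y = (ip y x)^*),
      (forall x : V, 0 <= ip x x) &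
      (forall x : V, ip x x = 0 -> x = 0)].

Definition hnorm (x : V) : RR := Num.sqrt (complex.Re (ip x x)).

Definition hcomplete : Prop :=
  forall u : nat -> V,
    (forall e : RR, 0 < e -> exists M : nat, forall m n : nat,
        (M <= m)%N -> (M <= n)%N -> hnorm (u m - u n) < e) ->
    exists l : V, forall e : RR, 0 < e -> exists M : nat, forall n : nat,
        (M <= n)%N -> hnorm (u n - l) < e.

Definition is_hilbert : Prop := is_inner_product /\ hcomplete.

Definition bounded_op (T : V -> V) : Prop :=
  (forall (a : CC) (x y : V), T (a *: x + y) = a *: T x + T y) /\
  exists M : RR, forall x : V, hnorm (T x) <= M * hnorm x.

Definition op_add (A B : V -> V) : V -> V := fun x => A x + B x.
Definition op_scale (c : CC) (A : V -> V) : V -> V := fun x => c *: A x.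
Definition op_mul (A B : V -> V) : V -> V := fun x => A (B x).

(* Hilbert adjoint A^* : the operator with <A x, y> = <x, A^* y>
   (exists and is unique for A in B(H), by Riesz) *)
Definition adjoint (A : V -> V) : V -> V :=
  epsilon (inhabits (fun x : V => x))
          (fun B : V -> V => forall x y : V, ip (A x) y = ip x (B y)).

Definition selfadjoint (A : V -> V) : Prop := adjoint A = A.

Definition op_Re (A : V -> V) : V -> V :=
  op_scale (2^-1) (op_add A (adjoint A)).

Definition cmod (c : CC) : RR := complex.Re `|c|.

Definition sa_algebra_norm (N : (V -> V) -> RR) : Prop :=
  (forall A, bounded_op A -> 0 <= N A) /\
  (forall A, bounded_op A -> N A = 0 -> A = (fun _ => 0)) /\
  (forall (c : CC) A, bounded_op A -> N (op_scale c A) = cmod c * N A) /\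
  (forall A B, bounded_op A -> bounded_op B ->
     N (op_add A B) <= N A + N B) /\
  (forall A B, bounded_op A -> bounded_op B ->
     N (op_mul A B) <= N A * N B) /\
  (forall A, bounded_op A -> N (adjoint A) = N A).

Definition expi (t : RR) : CC := (cos t +i* sin t)%C.

Definition w_N (N : (V -> V) -> RR) (T : V -> V) : RR :=
  sup [set N (op_Re (op_scale (expi t) T)) | t in [set: RR]].

End Hilbert.

(* Main.v *)
Require Import Defs.
From mathcomp Require Import all_boot all_order all_algebra.
From mathcomp Require Import all_classical all_reals all_analysis.
From mathcomp Require Import Rstruct Rstruct_topology complex.
From mathcomp Require Import ring lra.
From Stdlib Require Import ClassicalEpsilon.
Import Order.TTheory GRing.Theory Num.Theory.
Local Open Scope ring_scope.

Section Hilb.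
Variable V : lmodType CC.
Variable ip : V -> V -> CC.
Hypothesis HI : is_inner_product ip.

Lemma ipDZl a x y z : ip (a *: x + y) z = a * ip x z + ip y z.
Proof. by case: HI. Qed.
Lemma ipC x y : ip x y = (ip y x)^*.
Proof. by case: HI. Qed.
Lemma ip_ge0 x : 0 <= ip x x.
Proof. by case: HI. Qed.
Lemma ip_eq0 x : ip x x = 0 -> x = 0.
Proof. by case: HI => _ _ _; apply. Qed.
Lemma ip0l z : ip 0 z = 0.
Proof.
have := ipDZl 1 0 0 z; rewrite scaler0 addr0 mul1r => h.
have : ip 0 z + 0 = ip 0 z + ip 0 z by rewrite addr0.
by move/addrI.
Qed.
Lemma ipZl a x z : ip (a*:x) z = a * ip x z.
Proof. by have := ipDZl a x 0 z; rewrite addr0 ip0l addr0. Qed.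
Lemma ipDl x y z : ip (x+y) z = ip x z + ip y z.
Proof. by have := ipDZl 1 x y z; rewrite scale1r mul1r. Qed.
Lemma ipNl x z : ip (-x) z = - ip x z.
Proof. by rewrite -scaleN1r ipZl mulN1r. Qed.
Lemma ipBl x y z : ip (x - y) z = ip x z - ip y z.
Proof. by rewrite ipDl ipNl. Qed.
Lemma ipZr a x y : ip x (a*:y) = a^* * ip x y.
Proof. by rewrite ipC ipZl rmorphM /= -ipC. Qed.
Lemma ipDr x y z : ip x (y + z) = ip x y + ip x z.
Proof. by rewrite ipC ipDl rmorphD /= -!ipC. Qed.
Lemma ip0r x : ip x 0 = 0.
Proof. by rewrite ipC ip0l rmorph0. Qed.
Lemma ipNr x y : ip x (-y) = - ip x y.
Proof. by rewrite ipC ipNl rmorphN /= -ipC. Qed.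
Lemma ipBr x y z : ip x (y - z) = ip x y - ip x z.
Proof. by rewrite ipDr ipNr. Qed.

Definition q x := complex.Re (ip x x).
Definition n2 (z : CC) : RR := complex.Re z ^+ 2 + complex.Im z ^+ 2.

Lemma ipq x : ip x x = (q x)%:C%C.
Proof.
have := ip_ge0 x; rewrite lecE /q; case: (ip x x) => a b /= /andP [/eqP -> _].
by [].
Qed.
Lemma q_ge0 x : 0 <= q x.
Proof. by have := ip_ge0 x; rewrite lecE => /andP [_]. Qed.
Lemma q_eq0 x : q x = 0 -> x = 0.
Proof. by move=> h; apply: ip_eq0; rewrite ipq h. Qed.
Lemma hnorm_sq x : hnorm ip x ^+ 2 = q x.
Proof. by rewrite /hnorm sqr_sqrtr // q_ge0. Qed.
Lemma hnorm_ge0 x : 0 <= hnorm ip x.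
Proof. by rewrite /hnorm sqrtr_ge0. Qed.

Lemma qZ a x : q (a *: x) = n2 a * q x.
Proof.
rewrite /q ipZl ipZr ipq /n2; case: a => a1 a2 /=; ring.
Qed.
Lemma qD x y : q (x + y) = q x + q y + 2 * complex.Re (ip x y).
Proof.
rewrite /q ipDl !ipDr (ipC y x) !ipq; case: (ip x y) => a b /=; ring.
Qed.
Lemma n2_ge0 z : 0 <= n2 z.
Proof. rewrite /n2; nra. Qed.
Lemma ReN (w : CC) : complex.Re (- w) = - complex.Re w.
Proof. by case: w. Qed.
Lemma qN x : q (- x) = q x.
Proof. by rewrite /q ipNl ipNr opprK. Qed.
Lemma par x y : q (x + y) + q (x - y) = 2 * q x + 2 * q y.
Proof. rewrite !qD qN ipNr ReN; lra. Qed.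
Lemma n2_eq0 z : n2 z <= 0 -> z = 0.
Proof.
case: z => a b; rewrite /n2 /= => h.
have a0 : a = 0 by nra.
have b0 : b = 0 by nra.
by rewrite a0 b0.
Qed.
Lemma q0 : q 0 = 0.
Proof. by rewrite /q ip0l. Qed.

Lemma CS a b : n2 (ip a b) <= q a * q b.
Proof.
have [qa0|qa0] := eqVneq (q a) 0.
  rewrite (@q_eq0 a qa0) ip0l q0 mul0r /n2 /=; lra.
have qpos : 0 < q a by rewrite lt0r qa0 q_ge0.
set t := (q a)^-1.
have key : forall z : CC, n2 (((-t)%:C)%C * z^*) = t^+2 * n2 z /\
   complex.Re (((-t)%:C)%C * z^* * z) = - t * n2 z.
  by case=> x y; rewrite /n2 /=; split; ring.
have := q_ge0 ((((-t)%:C)%C * (ip a b)^*) *: a + b).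
rewrite qD qZ ipZl (proj1 (key _)) (proj2 (key _)).
move: (n2_ge0 (ip a b)) (q_ge0 b) => hN hb.
set N := n2 (ip a b) => h.
have e : q a * (t^+2 * N * q a + q b + 2 * (- t * N)) = N + q a * q b - 2 * N.
  by rewrite /t; field.
have := mulr_ge0 (ltW qpos) h; rewrite e; lra.
Qed.
Lemma small_inv (s : RR) : 0 < s -> exists M : nat, forall n, (M <= n)%N -> (n.+1%:R)^-1 < s.
Proof.
move=> s0; exists (Num.trunc (s^-1)) => n hn.
rewrite invf_plt ?posrE ?ltr0Sn //.
apply: (lt_le_trans (truncnS_gt _)).
by rewrite ler_nat ltnS.
Qed.

Lemma hnorm_lt x e : 0 < e -> q x < e ^+ 2 -> hnorm ip x < e.
Proof.
move=> e0 h; rewrite ltNge; apply/negP => h2.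
have := hnorm_sq x; have := hnorm_ge0 x; nra.
Qed.

Lemma conjR (r : RR) : ((r%:C)%C : CC)^* = (r%:C)%C.
Proof. by apply/eqP; rewrite eq_complex /= oppr0 !eqxx. Qed.

Lemma riesz (f : V -> CC) :
  (forall a x y, f (a *: x + y) = a * f x + f y) ->
  (exists K, forall v, n2 (f v) <= K * q v) ->
  hcomplete ip ->
  exists z, forall x, f x = ip x z.
Proof.
move=> lin [K0 hK0] HC.
have hK : forall v, n2 (f v) <= `|K0| * q v.
  move=> v; apply: (le_trans (hK0 v)); apply: ler_wpM2r; [exact: q_ge0 | exact: ler_norm].
set K := `|K0|; have K0' : 0 <= K := normr_ge0 _.
have f0 : f 0 = 0.
  have := lin 1 0 0; rewrite scaler0 addr0 mul1r => h.
  have : f 0 + 0 = f 0 + f 0 by rewrite addr0.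
  by move/addrI.
have fZ : forall a x, f (a *: x) = a * f x.
  by move=> a x; have := lin a x 0; rewrite !addr0 f0 addr0.
have fD : forall x y, f (x + y) = f x + f y.
  by move=> x y; have := lin 1 x y; rewrite scale1r mul1r.
have fB : forall x y, f (x - y) = f x - f y.
  by move=> x y; rewrite fD -scaleN1r fZ mulN1r.
case: (pselect (exists x0, f x0 != 0)) => [[x0 hx0]|hno]; last first.
  exists 0 => x; rewrite ip0r; apply/eqP; apply/negPn/negP => h; apply: hno.
  by exists x.
pose x1 := (f x0)^-1 *: x0.
have fx1 : f x1 = 1 by rewrite fZ mulVf.
pose E := (q @` [set x | f x = 1])%classic.
have hinf : has_inf E.
  split; first by exists (q x1), x1.
  by exists 0 => _ [x _ <-]; exact: q_ge0.
pose d := inf E.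
have dle : forall x, f x = 1 -> d <= q x.
  by move=> x hx; apply: (ge_inf (proj2 hinf)); exists x.
have d0 : 0 <= d.
  by apply: lb_le_inf (proj1 hinf) _ => _ [x _ <-]; exact: q_ge0.
have /choice [u hu] : forall n : nat, exists x, f x = 1 /\ q x < d + (n.+1%:R)^-1.
  move=> n; have hp : 0 < (n.+1%:R : RR)^-1 by rewrite invr_gt0 ltr0Sn.
  have [_ [x hx <-] hlt] := @inf_adherent _ E _ hp hinf.
  by exists x.
have hhalf : ((2^-1 : RR)%:C)%C * (1 + 1) = 1 :> CC.
  by apply/eqP; rewrite eq_complex /=; apply/andP; split; apply/eqP; field.
have cau : forall m n, q (u m - u n) <= 2 * (m.+1%:R)^-1 + 2 * (n.+1%:R)^-1.
  move=> m n; have [fm qm] := hu m; have [fn qn] := hu n.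
  have hmid : d <= q (((2^-1 : RR)%:C)%C *: (u m + u n)).
    by apply: dle; rewrite fZ fD fm fn hhalf.
  rewrite qZ /n2 /= in hmid.
  have := par (u m) (u n).
  have e4 : (2^-1 : RR) ^+ 2 + 0 ^+ 2 = 4^-1 by field.
  rewrite e4 mulrC ler_pdivlMr in hmid; last by lra.
  move=> hpar; move: (m.+1%:R^-1) (n.+1%:R^-1) qm qn => a b qm qn; clearbody d; lra.
have [l hl] : exists l, forall e, 0 < e -> exists M : nat, forall n, (M <= n)%N ->
    hnorm ip (u n - l) < e.
  apply: HC => e e0.
  have hs : 0 < e ^+ 2 / 4 by apply: divr_gt0; [exact: exprn_gt0 | lra].
  have [M hM] := small_inv _ hs.
  exists M => m n hm hn; apply: hnorm_lt => //.
  apply: (le_lt_trans (cau m n)).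
  have h1 := hM m hm; have h2 := hM n hn.
  move: (m.+1%:R^-1) (n.+1%:R^-1) h1 h2 => a b h1 h2; lra.
have hq : forall eta, 0 < eta -> exists M : nat, forall n, (M <= n)%N -> q (u n - l) < eta.
  move=> eta eta0; have hs : 0 < Num.sqrt eta by rewrite sqrtr_gt0.
  have [M hM] := hl _ hs.
  exists M => n hn; have := hM n hn; rewrite /hnorm ltr_sqrt //.
have fl : f l = 1.
  suff : n2 (1 - f l) <= 0 by move/n2_eq0/eqP; rewrite subr_eq0 => /eqP <-.
  apply/ler_addgt0Pr => eps eps0; rewrite add0r.
  have he : 0 < eps / (K + 1) by apply: divr_gt0 => //; lra.
  have [M hM] := hq _ he.
  have h1 := hK (u M - l); rewrite fB (proj1 (hu M)) in h1.
  have h2 := hM M (leqnn M).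
  have h3 : K * q (u M - l) <= K * (eps / (K + 1)).
    by apply: ler_wpM2l => //; exact: ltW.
  have hK1 : K + 1 != 0 by rewrite gt_eqF //; lra.
  have h4 : K * (eps / (K + 1)) = eps - eps / (K + 1) by field.
  move: h1 h3 h4 he; rewrite -/K; clearbody K; move: (eps / (K + 1)) => c h1 h3 h4 he. lra.
have ql : q l <= d.
  apply/ler_addgt0Pr => eps eps0.
  have hD : 0 < d + 4 + eps by lra.
  pose s := eps / (d + 4 + eps).
  have s0 : 0 < s by apply: divr_gt0.
  have hs : s * (d + 4 + eps) = eps.
    by rewrite /s mulrAC -mulrA mulfV ?mulr1 // gt_eqF.
  have s1 : s <= 1 by nra.
  have s2 : 0 < s ^+ 2 by exact: exprn_gt0.
  have [M1 hM1] := hq _ s2.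
  have [M2 hM2] := small_inv _ s0.
  pose n := maxn M1 M2.
  have hw := hM1 n (leq_maxl _ _).
  have hn := hM2 n (leq_maxr _ _).
  have [_ qn] := hu n.
  have ew : l = u n + (l - u n) by rewrite addrC subrK.
  have qw : q (l - u n) = q (u n - l) by rewrite -qN opprB.
  have k1 : n2 ((s%:C)%C) = s^+2 by rewrite /n2 /=; ring.
  have k2 : forall w : CC, complex.Re ((s%:C)%C * - w) = - (s * complex.Re w).
    by case=> a b /=; ring.
  have amgm : 0 <= s^+2 * q (u n) + q (l - u n) - 2 * (s * complex.Re (ip (u n) (l - u n))).
    have := q_ge0 (((s%:C)%C) *: u n - (l - u n)).
    rewrite qD qZ qN ipZl ipNr k1 k2 => hh; lra.
  rewrite {1}ew qD; rewrite -qw in hw.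
  move: amgm hw qn hn; move: (q (u n)) (q (l - u n)) (complex.Re (ip (u n) (l - u n))) (n.+1%:R^-1).
  move=> Qu Qw R i amgm hw qn hn.
  clearbody s d.
  have h5 : s * (2 * R) <= s * (s * Qu + s) by lra.
  rewrite ler_pM2l // in h5.
  have h6 : s * Qu <= s * (d + s) by apply: ler_wpM2l; [exact: ltW | lra].
  have h7 : s ^+ 2 <= s by nra.
  have h8 : 0 < s * eps by exact: mulr_gt0.
  lra.
have orth : forall k, f k = 0 -> ip l k = 0.
  move=> k fk; apply: n2_eq0.
  pose t := (q k + 1)^-1.
  have hk0 := q_ge0 k.
  have t0 : 0 < t by rewrite invr_gt0; lra.
  have et : t * (q k + 1) = 1 by rewrite mulVf // gt_eqF //; lra.
  have k1 : forall w : CC, n2 (((-t)%:C)%C * w) = t^+2 * n2 w /\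
      complex.Re ((((-t)%:C)%C * w)^* * w) = - t * n2 w.
    by case=> a b; rewrite /n2 /=; split; ring.
  have hf : f (l + (((-t)%:C)%C * ip l k) *: k) = 1 by rewrite fD fZ fk mulr0 addr0.
  have h := dle _ hf.
  rewrite qD qZ ipZr (proj1 (k1 _)) (proj2 (k1 _)) in h.
  have hN := n2_ge0 (ip l k).
  move: h hN; move: (n2 (ip l k)) => N h hN.
  have e2 : t ^+ 2 * N * q k = t * N * (t * q k) by ring.
  have e3 : t * q k = 1 - t by lra.
  rewrite e2 e3 in h.
  have : t * N <= 0 by clearbody t d; nra.
  by rewrite pmulr_rle0.
have qlnz : q l != 0.
  apply/eqP => h; move: fl; rewrite (@q_eq0 l h) f0 => /eqP.
  by rewrite eq_sym oner_eq0.
exists ((((q l)^-1)%:C)%C *: l); move=> x.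
have hk : f (x - f x *: l) = 0 by rewrite fB fZ fl mulr1 subrr.
have o := orth _ hk.
rewrite ipBr ipZr ipq in o.
have o' : ip l x = (f x)^* * ((q l)%:C)%C by apply/eqP; rewrite -subr_eq0 o.
rewrite ipZr conjR (ipC x l) o'.
move: (f x) (q l) qlnz => w r hr.
by case: w => a b; apply/eqP; rewrite eq_complex /=; apply/andP; split; apply/eqP; field.
Qed.
Lemma adj_ex T : hcomplete ip -> bounded_op ip T ->
  exists B, forall x y, ip (T x) y = ip x (B y).
Proof.
move=> HC [lT [M hM]].
have : forall y, exists z, forall x, ip (T x) y = ip x z.
  move=> y; apply: riesz => //.
    by move=> a x x'; rewrite lT ipDl ipZl.
  exists (M ^+ 2 * q y) => v.
  apply: (le_trans (CS (T v) y)).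
  have h1 := hM v; have h2 := hnorm_ge0 (T v); have h3 := hnorm_ge0 v.
  have e1 := hnorm_sq (T v); have e2 := hnorm_sq v.
  have hqy := q_ge0 y.
  have : q (T v) <= M ^+ 2 * q v.
    rewrite -e1 -e2.
    have h4 : 0 <= M * hnorm ip v by lra.
    have h5 : 0 <= M * hnorm ip v + hnorm ip (T v) by lra.
    have h6 : 0 <= M * hnorm ip v - hnorm ip (T v) by lra.
    have := mulr_ge0 h5 h6; nra.
  move=> h; have := ler_wpM2r hqy h; nra.
by move/choice => [B hB]; exists B.
Qed.

Lemma adj_uniq A B : (forall x y, ip (A x) y = ip x (B y)) -> adjoint ip A = B.
Proof.
move=> hB.
have hA : forall x y, ip (A x) y = ip x (adjoint ip A y) :=
  epsilon_spec _ (fun B0 : V -> V => forall x y, ip (A x) y = ip x (B0 y)) (ex_intro _ B hB).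
apply: funext => y; apply/eqP; rewrite -subr_eq0; apply/eqP; apply: ip_eq0.
by rewrite ipBr -hA -hB subrr.
Qed.

Lemma sa_sym T : hcomplete ip -> bounded_op ip T -> selfadjoint ip T ->
  forall x y, ip (T x) y = ip x (T y).
Proof.
move=> HC bT sT; have [B hB] := adj_ex T HC bT.
have := adj_uniq T B hB; rewrite sT => eTB x y; rewrite {2}eTB; exact: hB.
Qed.
Lemma bounded_mul T S : bounded_op ip T -> bounded_op ip S -> bounded_op ip (op_mul T S).
Proof.
move=> [lT [MT hT]] [lS [MS hS]]; split.
  by move=> a x y; rewrite /op_mul lS lT.
exists (`|MT| * `|MS|) => x; rewrite /op_mul.
apply: (le_trans (hT (S x))).
have h1 := hnorm_ge0 (S x); have h2 := hnorm_ge0 x.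
apply: (le_trans (ler_wpM2r h1 (ler_norm MT))).
rewrite -mulrA; apply: ler_wpM2l; first exact: normr_ge0.
apply: (le_trans (hS x)); apply: ler_wpM2r => //; exact: ler_norm.
Qed.
End Hilb.

Lemma norm_expi t : `|expi t| = 1.
Proof. by rewrite normc_def /= cos2Dsin2 sqrtr1. Qed.

Lemma cmod_le1 (c d : CC) : `|c| = 1 ->
  (d = 2^-1 * (c + c^*) \/ d = 2^-1 * (c - c^*)) -> cmod d <= 1.
Proof.
move=> hc hd.
have h2 : `|(2^-1 : CC)| = 2^-1 by rewrite ger0_norm // invr_ge0 ler0n.
have h2p : (0 : CC) <= 2^-1 by rewrite invr_ge0 ler0n.
have e : (2^-1 : CC) * (1 + 1) = 1 by rewrite -[1 + 1]/(2 : CC) mulVf // pnatr_eq0.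
have : `|d| <= 1.
  case: hd => ->; rewrite normrM h2.
    apply: (le_trans (ler_wpM2l h2p (ler_normD _ _))).
    by rewrite norm_conjC hc e.
  apply: (le_trans (ler_wpM2l h2p (ler_normB _ _))).
  by rewrite norm_conjC hc e.
by rewrite lecE => /andP [_ h].
Qed.

Theorem corollary2p9 (V : lmodType CC) (ip : V -> V -> CC)
  (HH : is_hilbert ip) (N : (V -> V) -> RR) (HN : sa_algebra_norm ip N)
  (T S : V -> V)
  (bT : bounded_op ip T) (bS : bounded_op ip S)
  (sT : selfadjoint ip T) (sS : selfadjoint ip S)
  (hTS : op_mul T S = op_mul S T \/ op_mul T S = op_scale (-1) (op_mul S T)) :
  w_N ip N (op_mul T S) <= Num.min (N T * w_N ip N S) (N S * w_N ip N T).
Proof.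
have [HI HC] := HH.
have ipZl := @ipZl V ip HI; have ipZr := @ipZr V ip HI.
have [N0 [_ [NZ [_ [NM _]]]]] := HN.
have symT := @sa_sym V ip HI T HC bT sT.
have symS := @sa_sym V ip HI S HC bS sS.
have bTS := @bounded_mul V ip T S bT bS.
have adjX : forall X, (forall x y, ip (X x) y = ip x (X y)) ->
    forall c, adjoint ip (op_scale c X) = op_scale c^* X.
  move=> X symX c; apply: (@adj_uniq V ip HI) => x y.
  by rewrite /op_scale ipZl ipZr conjCK symX.
have ReX : forall X, (forall x y, ip (X x) y = ip x (X y)) ->
    forall c, op_Re ip (op_scale c X) = op_scale (2^-1 * (c + c^*)) X.
  move=> X symX c; rewrite /op_Re adjX //; apply: funext => x.
  by rewrite /op_scale /op_add -scalerDl scalerA.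
have adjTS : forall c, adjoint ip (op_scale c (op_mul T S)) = op_scale c^* (op_mul S T).
  move=> c; apply: (@adj_uniq V ip HI) => x y.
  by rewrite /op_scale /op_mul ipZl ipZr conjCK symT symS.
have ReTS : forall c, exists d, (d = 2^-1 * (c + c^*) \/ d = 2^-1 * (c - c^*)) /\
    op_Re ip (op_scale c (op_mul T S)) = op_scale d (op_mul T S).
  move=> c; rewrite /op_Re adjTS; case: hTS => h.
    exists (2^-1 * (c + c^*)); split; first by left.
    apply: funext => x; have e := congr1 (fun F => F x) h.
    by rewrite /op_scale /op_add /op_mul /= in e *; rewrite -e -scalerDl scalerA.
  exists (2^-1 * (c - c^*)); split; first by right.
  apply: funext => x; have e := congr1 (fun F => F x) h.
  rewrite /op_scale /op_add /op_mul /= in e *.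
  have e' : S (T x) = - T (S x) by rewrite e scaleN1r opprK.
  by rewrite e' scalerN -scalerBl scalerA.
have bound : forall t, N (op_Re ip (op_scale (expi t) (op_mul T S))) <= N T * N S.
  move=> t; have [d [hd ->]] := ReTS (expi t).
  rewrite NZ //; have h1 := cmod_le1 _ _ (norm_expi t) hd.
  have h2 := N0 _ bTS; have h3 := NM _ _ bT bS.
  apply: (le_trans _ h3); apply: (le_trans (ler_wpM2r h2 h1)); by rewrite mul1r.
have boundX : forall X, bounded_op ip X -> (forall x y, ip (X x) y = ip x (X y)) ->
    forall t, N (op_Re ip (op_scale (expi t) X)) <= N X.
  move=> X bX symX t; rewrite ReX // NZ //.
  have h1 := cmod_le1 (expi t) (2^-1 * (expi t + (expi t)^*)) (norm_expi t) (or_introl erefl).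
  have h2 := N0 _ bX.
  apply: (le_trans (ler_wpM2r h2 h1)); by rewrite mul1r.
have at0 : forall X, bounded_op ip X -> (forall x y, ip (X x) y = ip x (X y)) ->
    N (op_Re ip (op_scale (expi 0) X)) = N X.
  move=> X bX symX; rewrite ReX // NZ //.
  have -> : expi 0 = 1 by rewrite /expi cos0 sin0.
  have e : (2^-1 : CC) * (1 + 1) = 1 by rewrite -[1 + 1]/(2 : CC) mulVf // pnatr_eq0.
  by rewrite conjC1 e /cmod normr1 /= mul1r.
have wX : forall X, bounded_op ip X -> (forall x y, ip (X x) y = ip x (X y)) ->
    N X <= w_N ip N X.
  move=> X bX symX; apply: sup_upper_bound.
    split; first by exists (N X), 0 => //; exact: at0.
    by exists (N X) => _ [t _ <-]; exact: boundX.
  by exists 0 => //; exact: at0.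
have wTS : w_N ip N (op_mul T S) <= N T * N S.
  apply: ge_sup.
    by exists (N (op_Re ip (op_scale (expi 0) (op_mul T S)))), 0.
  by move=> _ [t _ <-]; exact: bound.
rewrite le_min; apply/andP; split.
  apply: (le_trans wTS); by apply: ler_wpM2l; [exact: N0 | exact: wX].
apply: (le_trans wTS); rewrite mulrC; by apply: ler_wpM2l; [exact: N0 | exact: wX].
Qed.
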